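(* Let $X\in\mathbb{R}^{n\times p}$, $y\in\mathbb{R}^n$, $\beta\in\mathbb{R}^p$ with $s=|S|\ge 1$, and put $\epsilon=y-X\beta$. Let $\lambda,\rho_1,\rho_2\ge 0$, $\tau\in[0,1)$, and let $\widehat\beta^{\tau}$ be a minimizer of $\beta'\mapsto V_\tau(\beta')$ (for $\tau=0$, of $V_0$). Suppose $1\le\max(q_R,\widehat s^{\tau})\le p$ and $\kappa_n+\lambda n^{-1}>0$. Then $$\|\widehat\beta^{\tau}-\beta\|_2\le\frac{q_R^{1/2}}{\kappa_n+\lambda n^{-1}}\left\{4\Big[1+\Big(\frac{\widehat s^{\tau}}{4s}\Big)^{1/2}\Big]\frac{\|X^T\epsilon\|_\infty}{n}+2\max_{j\in S}|\beta_j|\frac{\lambda}{n}+\Big[\frac{2c_2^{-1}+1}{\log(\tau^{-1})}+c_3^{-1}\Big]\frac{\rho_1+\rho_2}{n}\right\},$$ where $\kappa_n=n^{-1}\min_{\|w\|_2=1}w^TX^TXw$, $c_2=\min_{j\in\widehat S^{\tau}}|\widehat\beta^{\tau}_j|$, $c_3=\min_{j\in S}|\beta_j|$, and for $\tau=0$ the term $1/\log(\tau^{-1})$ is read as $0$.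
   Context: Groups: $G_1,\dots,G_m$ are pairwise disjoint nonempty subsets of $\{1,\dots,p\}$ whose union is $\{1,\dots,p\}$, with sizes $q_k=|G_k|$; $\beta_{G_k}$ (resp. $X_{G_k}$) denotes the subvector of $\beta$ (resp. the columns of $X$) indexed by $G_k$. For $\tau\in(0,1)$ define $$V_\tau(\beta')=\|y-X\beta'\|_2^2+\lambda\|\beta'\|_2^2+\rho_1\sum_{j=1}^p\frac{\log(1+\tau^{-1}|\beta'_j|)}{\log(1+\tau^{-1})}+\rho_2\sum_{k=1}^m\sqrt{q_k}\,\frac{\log(1+\tau^{-1}\|\beta'_{G_k}\|_2)}{\log(1+\tau^{-1})},$$ and $V_0(\beta')=\lim_{\tau\to0}V_\tau(\beta')=\|y-X\beta'\|_2^2+\lambda\|\beta'\|_2^2+\rho_1\#\{j:\beta'_j\neq0\}+\rho_2\sum_k\sqrt{q_k}\,\mathbb{I}\{\|\beta'_{G_k}\|_2\neq0\}$ (a minimizer of $V_0$ is called the gvsnss estimator). $\widehat S^{\tau}=\{j:\widehat\beta^{\tau}_j\ne0\}$, $\widehat s^{\tau}=|\widehat S^{\tau}|$. For the (true) vector $\beta$: $S=\{j:\beta_j\neq0\}$, $R=\{k:\|\beta_{G_k}\|_2\neq0\}$ (the groups covering $S$), $G_R=\bigcup_{k\in R}G_k$, $q_R=|G_R|=\sum_{k\in R}q_k$. *)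

(* Defs.v *)
From Stdlib Require Import Reals Lra Lia Arith.
Open Scope R_scope.

(* Indices are 0-based: j ranges over 0..p-1, i over 0..n-1, k over 0..m-1. *)

Fixpoint fsum (k : nat) (f : nat -> R) : R :=
  match k with O => 0 | S k' => fsum k' f + f k' end.

Fixpoint nsum (k : nat) (f : nat -> nat) : nat :=
  match k with O => O | S k' => (nsum k' f + f k')%nat end.

Definition nzb (x : R) : bool := if Req_dec_T x 0 then false else true.

Definition card_nz (k : nat) (b : nat -> R) : nat :=
  nsum k (fun j => if nzb (b j) then 1%nat else 0%nat).

Fixpoint min_abs_supp (k : nat) (b : nat -> R) : option R :=
  match k with
  | O => None
  | S k' =>
      let r := min_abs_supp k' b in
      if nzb (b k') then
        match r with None => Some (Rabs (b k')) | Some c => Some (Rmin c (Rabs (b k'))) end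
      else r
  end.

Fixpoint max_abs_supp (k : nat) (b : nat -> R) : option R :=
  match k with
  | O => None
  | S k' =>
      let r := max_abs_supp k' b in
      if nzb (b k') then
        match r with None => Some (Rabs (b k')) | Some c => Some (Rmax c (Rabs (b k'))) end
      else r
  end.

(* reciprocal of a minimum; the min over the empty set is +infinity, with reciprocal 0 *)
Definition inv_min_abs_supp (k : nat) (b : nat -> R) : R :=
  match min_abs_supp k b with None => 0 | Some c => / c end.

Definition max_abs_on_supp (k : nat) (b : nat -> R) : R :=
  match max_abs_supp k b with None => 0 | Some c => c end.

(* max over i < k of f i (f nonnegative here; default 0) *)
Fixpoint fmax (k : nat) (f : nat -> R) : R :=
  match k with O => 0 | S k' => Rmax (fmax k' f) (f k') end.

(* Groups: grp j = k means j belongs to G_k (a partition of {0..p-1} into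
   m nonempty groups). *)
Definition is_group_partition (p m : nat) (grp : nat -> nat) : Prop :=
  (forall j, (j < p)%nat -> (grp j < m)%nat) /\
  (forall k, (k < m)%nat -> exists j, (j < p)%nat /\ grp j = k).

Definition gsize (p : nat) (grp : nat -> nat) (k : nat) : nat :=
  nsum p (fun j => if Nat.eqb (grp j) k then 1%nat else 0%nat).

Definition gnorm (p : nat) (grp : nat -> nat) (b : nat -> R) (k : nat) : R :=
  sqrt (fsum p (fun j => if Nat.eqb (grp j) k then b j ^ 2 else 0)).

Definition qR (p m : nat) (grp : nat -> nat) (b : nat -> R) : nat :=
  nsum m (fun k => if nzb (gnorm p grp b k) then gsize p grp k else 0%nat).

Definition Xmul (p : nat) (X : nat -> nat -> R) (b : nat -> R) (i : nat) : R :=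
  fsum p (fun j => X i j * b j).

Definition norm2 (p : nat) (b : nat -> R) : R := sqrt (fsum p (fun j => b j ^ 2)).

Definition fit (n p : nat) (X : nat -> nat -> R) (y : nat -> R) (lam : R) (b : nat -> R) : R :=
  fsum n (fun i => (y i - Xmul p X b i) ^ 2) + lam * fsum p (fun j => b j ^ 2).

Definition Vtau (n p m : nat) (grp : nat -> nat) (X : nat -> nat -> R) (y : nat -> R)
  (lam rho1 rho2 tau : R) (b : nat -> R) : R :=
  fit n p X y lam b
  + rho1 * fsum p (fun j => ln (1 + / tau * Rabs (b j)) / ln (1 + / tau))
  + rho2 * fsum m (fun k => sqrt (INR (gsize p grp k))
                            * (ln (1 + / tau * gnorm p grp b k) / ln (1 + / tau))).

Definition V0 (n p m : nat) (grp : nat -> nat) (X : nat -> nat -> R) (y : nat -> R)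
  (lam rho1 rho2 : R) (b : nat -> R) : R :=
  fit n p X y lam b
  + rho1 * INR (card_nz p b)
  + rho2 * fsum m (fun k => sqrt (INR (gsize p grp k))
                            * (if nzb (gnorm p grp b k) then 1 else 0)).

Definition Vobj (n p m : nat) (grp : nat -> nat) (X : nat -> nat -> R) (y : nat -> R)
  (lam rho1 rho2 tau : R) (b : nat -> R) : R :=
  if Req_dec_T tau 0 then V0 n p m grp X y lam rho1 rho2 b
  else Vtau n p m grp X y lam rho1 rho2 tau b.

Definition inv_log_inv (tau : R) : R :=
  if Req_dec_T tau 0 then 0 else / ln (/ tau).

(* kappa is  n^{-1} min_{||w||_2 = 1} w^T X^T X w  (w^T X^T X w = ||X w||_2^2) *)
Definition is_kappa (n p : nat) (X : nat -> nat -> R) (kappa : R) : Prop :=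
  (exists w : nat -> R, norm2 p w = 1 /\
      fsum n (fun i => Xmul p X w i ^ 2) / INR n = kappa) /\
  (forall w : nat -> R, norm2 p w = 1 ->
      kappa <= fsum n (fun i => Xmul p X w i ^ 2) / INR n).

Definition XtEps_inf (n p : nat) (X : nat -> nat -> R) (y beta : nat -> R) : R :=
  fmax p (fun j => Rabs (fsum n (fun i => X i j * (y i - Xmul p X beta i)))).

(* Main.v *)
Require Import Defs.
From Stdlib Require Import Reals Lra Lia Arith Classical.
Open Scope R_scope.

Lemma fsum_ext k f g : (forall j, (j < k)%nat -> f j = g j) -> fsum k f = fsum k g.
Proof. induction k; simpl; intros H; auto. rewrite IHk by (intros; apply H; lia). rewrite H by lia. auto. Qed.

Lemma fsum_le k f g : (forall j, (j<k)%nat -> f j <= g j) -> fsum k f <= fsum k g.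
Proof. induction k; simpl; intros H; [lra|]. assert (fsum k f <= fsum k g) by (apply IHk; intros; apply H; lia). specialize (H k ltac:(lia)). lra. Qed.

Lemma fsum_plus k f g : fsum k (fun j => f j + g j) = fsum k f + fsum k g.
Proof. induction k; simpl; [lra|]. rewrite IHk; ring. Qed.

Lemma fsum_scal k c f : fsum k (fun j => c * f j) = c * fsum k f.
Proof. induction k; simpl; [ring|]. rewrite IHk; ring. Qed.

Lemma fsum_minus k f g : fsum k (fun j => f j - g j) = fsum k f - fsum k g.
Proof. induction k; simpl; [lra|]. rewrite IHk; ring. Qed.

Lemma fsum_zero k : fsum k (fun _ => 0) = 0.
Proof. induction k; simpl; [lra|]. rewrite IHk; ring. Qed.

Lemma fsum_nonneg k f : (forall j, (j<k)%nat -> 0 <= f j) -> 0 <= fsum k f.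
Proof. intros H. rewrite <- (fsum_zero k). apply fsum_le. auto. Qed.

Lemma fsum_term k f j : (forall j, (j<k)%nat -> 0 <= f j) -> (j < k)%nat -> f j <= fsum k f.
Proof. induction k; simpl; intros H Hj; [lia|].
  assert (0 <= fsum k f) by (apply fsum_nonneg; intros; apply H; lia).
  destruct (Nat.eq_dec j k) as [->|Hne].
  - lra.
  - assert (f j <= fsum k f) by (apply IHk; [intros; apply H; lia | lia]).
    specialize (H k ltac:(lia)). lra. Qed.

Lemma fsum_swap a b (F : nat -> nat -> R) :
  fsum a (fun i => fsum b (fun j => F i j)) = fsum b (fun j => fsum a (fun i => F i j)).
Proof. induction a; simpl. - rewrite fsum_zero; auto.
  - rewrite IHa. rewrite <- fsum_plus. auto. Qed.

Lemma INR_nsum k f : INR (nsum k f) = fsum k (fun j => INR (f j)).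
Proof. induction k; simpl; auto. rewrite plus_INR, IHk. auto. Qed.

Lemma fsum_ind m t (c : nat -> R) :
  fsum m (fun k => if Nat.eqb t k then c k else 0) = if Nat.ltb t m then c t else 0.
Proof. induction m; simpl.
  - destruct (Nat.ltb t 0) eqn:E; [apply Nat.ltb_lt in E; lia | auto].
  - rewrite IHm. destruct (Nat.eqb t m) eqn:E1.
    + apply Nat.eqb_eq in E1; subst t. assert (Nat.ltb m m = false) as -> by (apply Nat.ltb_ge; lia).
      assert (Nat.ltb m (S m) = true) as -> by (apply Nat.ltb_lt; lia). ring.
    + apply Nat.eqb_neq in E1. destruct (Nat.ltb_spec t m); destruct (Nat.ltb_spec t (S m)); try lia; ring. Qed.

Lemma CS k a b : fsum k (fun j => a j * b j) <=
  sqrt (fsum k (fun j => a j ^ 2)) * sqrt (fsum k (fun j => b j ^ 2)).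
Proof.
  set (A := fsum k (fun j => a j ^ 2)). set (B := fsum k (fun j => b j ^ 2)).
  assert (HA : 0 <= A) by (apply fsum_nonneg; intros; nra).
  assert (HB : 0 <= B) by (apply fsum_nonneg; intros; nra).
  assert (sA := sqrt_sqrt A HA). assert (sB := sqrt_sqrt B HB).
  assert (pA := sqrt_pos A). assert (pB := sqrt_pos B).
  destruct (Req_dec (sqrt A * sqrt B) 0) as [Z|NZ].
  - assert (Hz : sqrt A = 0 \/ sqrt B = 0) by (apply Rmult_integral; auto).
    assert (fsum k (fun j => a j * b j) = 0).
    { rewrite <- (fsum_zero k). apply fsum_ext. intros j Hj.
      destruct Hz as [H|H].
      - assert (a j ^ 2 <= A) by (apply (fsum_term k (fun j => a j ^ 2)); auto; intros; nra).
        assert (A = 0) by nra. assert (a j = 0) by nra. rewrite H2; ring.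
      - assert (b j ^ 2 <= B) by (apply (fsum_term k (fun j => b j ^ 2)); auto; intros; nra).
        assert (B = 0) by nra. assert (b j = 0) by nra. rewrite H2; ring. }
    rewrite H, Z. lra.
  - assert (P : 0 < sqrt A * sqrt B) by (destruct (Rle_lt_or_eq_dec _ _ (Rmult_le_pos _ _ pA pB)); auto; lra).
    assert (H : fsum k (fun j => 2 * (sqrt A * sqrt B) * (a j * b j)) <=
                fsum k (fun j => (a j ^ 2) * B + (b j ^ 2) * A)).
    { apply fsum_le. intros j _. clear NZ P. set (sa := sqrt A) in *; set (sb := sqrt B) in *.
      rewrite <- sA, <- sB. clearbody sa sb A B. assert (0 <= (a j * sb - b j * sa)^2) by apply pow2_ge_0. nra. }
    rewrite fsum_scal, fsum_plus in H.
    rewrite (fsum_ext k (fun j => a j ^ 2 * B) (fun j => B * a j ^ 2)) in H by (intros; ring).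
    rewrite (fsum_ext k (fun j => b j ^ 2 * A) (fun j => A * b j ^ 2)) in H by (intros; ring).
    rewrite !fsum_scal in H. fold A B in H.
    apply (Rmult_le_reg_l (2 * (sqrt A * sqrt B))); [lra|].
    set (sa := sqrt A) in *; set (sb := sqrt B) in *. clearbody sa sb A B.
    rewrite <- sA, <- sB in H. nra.
Qed.

Lemma fsum_opp k f : fsum k (fun j => - f j) = - fsum k f.
Proof. induction k; simpl; [lra|]. rewrite IHk; ring. Qed.

Lemma nzb_true x : nzb x = true -> x <> 0.
Proof. unfold nzb; destruct (Req_dec_T x 0); congruence. Qed.
Lemma nzb_false x : nzb x = false -> x = 0.
Proof. unfold nzb; destruct (Req_dec_T x 0); congruence. Qed.
Lemma nzb_nz x : x <> 0 -> nzb x = true.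
Proof. unfold nzb; destruct (Req_dec_T x 0); congruence. Qed.
Lemma nzb_0 : nzb 0 = false.
Proof. unfold nzb; destruct (Req_dec_T 0 0); congruence. Qed.

Definition ind (b : bool) : R := if b then 1 else 0.

Lemma card_nz_eq k b : INR (card_nz k b) = fsum k (fun j => ind (nzb (b j))).
Proof. unfold card_nz. rewrite INR_nsum. apply fsum_ext. intros. unfold ind. destruct (nzb (b j)); simpl; auto. Qed.

Lemma norm2_pos k b : 0 <= norm2 k b.
Proof. apply sqrt_pos. Qed.

Lemma norm2_sq k b : norm2 k b * norm2 k b = fsum k (fun j => b j ^ 2).
Proof. apply sqrt_sqrt. apply fsum_nonneg. intros; nra. Qed.

Lemma norm2_ge k b j : (j < k)%nat -> Rabs (b j) <= norm2 k b.
Proof. intros Hj. rewrite <- sqrt_Rsqr_abs. apply sqrt_le_1_alt.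
  unfold Rsqr. replace (b j * b j) with (b j ^ 2) by ring.
  apply (fsum_term k (fun j => b j ^ 2)); auto. intros; nra. Qed.

Lemma norm2_tri k u w : norm2 k (fun j => u j - w j) <= norm2 k u + norm2 k w.
Proof.
  assert (C := CS k u (fun j => - w j)). cbv beta in C.
  rewrite (fsum_ext k (fun j => (- w j) ^ 2) (fun j => w j ^ 2)) in C by (intros; ring).
  fold (norm2 k u) (norm2 k w) in C.
  assert (E : fsum k (fun j => (u j - w j) ^ 2) =
     fsum k (fun j => u j ^ 2) + 2 * fsum k (fun j => u j * - w j) + fsum k (fun j => w j ^ 2)).
  { rewrite <- fsum_scal, <- !fsum_plus. apply fsum_ext. intros; ring. }
  unfold norm2 at 1. rewrite E. rewrite <- (norm2_sq k u), <- (norm2_sq k w).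
  assert (pu := norm2_pos k u). assert (pw := norm2_pos k w).
  rewrite <- (sqrt_square (norm2 k u + norm2 k w)) by lra.
  apply sqrt_le_1_alt. nra. Qed.

Lemma min_abs_spec k b : match min_abs_supp k b with
  | None => forall j, (j < k)%nat -> b j = 0
  | Some c => 0 < c /\ forall j, (j < k)%nat -> b j <> 0 -> c <= Rabs (b j) end.
Proof. induction k; simpl.
  - intros; lia.
  - destruct (nzb (b k)) eqn:E.
    + apply nzb_true in E. destruct (min_abs_supp k b) as [c|].
      * destruct IHk as [Hc H]. split. { apply Rmin_pos; auto. apply Rabs_pos_lt; auto. }
        intros j Hj Hb. destruct (Nat.eq_dec j k) as [->|].
        -- apply Rmin_r.
        -- eapply Rle_trans; [apply Rmin_l|]. apply H; auto; lia.
      * split. { apply Rabs_pos_lt; auto. }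
        intros j Hj Hb. destruct (Nat.eq_dec j k) as [->|]. lra. exfalso. apply Hb, IHk. lia.
    + apply nzb_false in E. destruct (min_abs_supp k b) as [c|].
      * destruct IHk as [Hc H]. split; auto. intros j Hj Hb. destruct (Nat.eq_dec j k) as [->|]. congruence. apply H; auto; lia.
      * intros j Hj. destruct (Nat.eq_dec j k) as [->|]; auto. apply IHk; lia.
Qed.

Lemma inv_min_spec k b : 0 <= inv_min_abs_supp k b /\
  forall j, (j < k)%nat -> b j <> 0 -> 1 <= inv_min_abs_supp k b * Rabs (b j).
Proof. unfold inv_min_abs_supp. assert (H := min_abs_spec k b).
  destruct (min_abs_supp k b) as [c|].
  - destruct H as [Hc H]. split. { left; apply Rinv_0_lt_compat; auto. }
    intros j Hj Hb. specialize (H j Hj Hb). apply (Rmult_le_reg_l c); auto.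
    rewrite <- Rmult_assoc, Rinv_r by lra. lra.
  - split; [lra|]. intros j Hj Hb. exfalso; auto. Qed.

Lemma max_abs_spec k b : match max_abs_supp k b with
  | None => forall j, (j < k)%nat -> b j = 0
  | Some c => 0 <= c /\ forall j, (j < k)%nat -> Rabs (b j) <= c end.
Proof. induction k; simpl.
  - intros; lia.
  - destruct (nzb (b k)) eqn:E.
    + destruct (max_abs_supp k b) as [c|].
      * destruct IHk as [Hc H]. split. { eapply Rle_trans; [|apply Rmax_l]; auto. }
        intros j Hj. destruct (Nat.eq_dec j k) as [->|].
        -- apply Rmax_r.
        -- eapply Rle_trans; [|apply Rmax_l]. apply H; lia.
      * split. { apply Rabs_pos. }
        intros j Hj. destruct (Nat.eq_dec j k) as [->|]. lra. rewrite IHk by lia. rewrite Rabs_R0; apply Rabs_pos.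
    + apply nzb_false in E. destruct (max_abs_supp k b) as [c|].
      * destruct IHk as [Hc H]. split; auto. intros j Hj. destruct (Nat.eq_dec j k) as [->|]. rewrite E, Rabs_R0; auto. apply H; lia.
      * intros j Hj. destruct (Nat.eq_dec j k) as [->|]; auto. apply IHk; lia.
Qed.

Lemma max_on_spec k b : 0 <= max_abs_on_supp k b /\
  forall j, (j < k)%nat -> Rabs (b j) <= max_abs_on_supp k b.
Proof. unfold max_abs_on_supp. assert (H := max_abs_spec k b).
  destruct (max_abs_supp k b) as [c|]; auto.
  split; [lra|]. intros j Hj. rewrite H by auto. rewrite Rabs_R0; lra. Qed.

Lemma fmax_spec k f : 0 <= fmax k f /\ forall j, (j < k)%nat -> f j <= fmax k f.
Proof. induction k; simpl. - split; [lra| intros; lia].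
  - destruct IHk as [H0 H]. split. { eapply Rle_trans; [|apply Rmax_l]; auto. }
    intros j Hj. destruct (Nat.eq_dec j k) as [->|]. apply Rmax_r.
    eapply Rle_trans; [|apply Rmax_l]. apply H; lia. Qed.

Lemma gnorm_eq p grp b k : gnorm p grp b k = norm2 p (fun j => if Nat.eqb (grp j) k then b j else 0).
Proof. unfold gnorm, norm2. f_equal. apply fsum_ext. intros. destruct (Nat.eqb (grp j) k); ring. Qed.

Lemma gnorm_pos p grp b k : 0 <= gnorm p grp b k.
Proof. apply sqrt_pos. Qed.

Lemma gnorm_ge p grp b k j : (j < p)%nat -> grp j = k -> Rabs (b j) <= gnorm p grp b k.
Proof. intros Hj Hg. rewrite gnorm_eq.
  eapply Rle_trans; [|apply (norm2_ge p _ j Hj)]. simpl. rewrite Hg, Nat.eqb_refl. lra. Qed.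

Lemma gnorm_tri p grp bh be k :
  gnorm p grp be k <= gnorm p grp bh k + gnorm p grp (fun j => bh j - be j) k.
Proof. rewrite !gnorm_eq.
  eapply Rle_trans; [|apply norm2_tri]. right. unfold norm2. f_equal. apply fsum_ext.
  intros. destruct (Nat.eqb (grp j) k); ring. Qed.

Lemma gnorm_nz p grp b k : gnorm p grp b k <> 0 ->
  exists j, (j < p)%nat /\ grp j = k /\ b j <> 0.
Proof. intros H. apply NNPP. intros C. apply H. unfold gnorm.
  rewrite (fsum_ext p _ (fun _ => 0)). { rewrite fsum_zero. apply sqrt_0. }
  intros j Hj. destruct (Nat.eqb (grp j) k) eqn:E; auto.
  apply Nat.eqb_eq in E. destruct (Req_dec (b j) 0) as [Z|Z]. rewrite Z; ring.
  exfalso. apply C. eauto. Qed.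

Lemma ln_le_mono x y : 0 < x -> x <= y -> ln x <= ln y.
Proof. intros Hx [H|H]. left; apply ln_increasing; auto. subst; lra. Qed.

Lemma ln1p t : -1 < t -> ln (1 + t) <= t.
Proof. intros Ht. destruct (Rle_or_lt (ln (1 + t)) t) as [H|H]; auto.
  apply exp_increasing in H. rewrite exp_ln in H by lra. assert (E := exp_ineq1_le t). lra. Qed.

Lemma ln_diff A B : 0 < A -> 0 < B -> ln A - ln B <= (A - B) / B.
Proof. intros HA HB. replace A with (B * (1 + (A - B) / B)) at 1 by (field; lra).
  rewrite ln_mult; [| lra |].
  - assert (ln (1 + (A - B) / B) <= (A - B) / B); [apply ln1p|lra].
    apply (Rmult_lt_reg_l B); auto. field_simplify; lra.
  - replace (1 + (A - B) / B) with (A / B) by (field; lra). apply Rdiv_lt_0_compat; auto. Qed.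

Definition pen (tau x : R) : R := if Req_dec_T tau 0 then ind (nzb x)
  else ln (1 + / tau * Rabs x) / ln (1 + / tau).

Lemma ind_nonneg b : 0 <= ind b.
Proof. destruct b; simpl; lra. Qed.

Section PenLemmas.
Variable tau : R.
Hypothesis Ht : 0 < tau < 1.

Lemma T_pos : 0 < ln (1 + / tau).
Proof. rewrite <- ln_1. apply ln_increasing; [lra|]. assert (0 < / tau) by (apply Rinv_0_lt_compat; lra). lra. Qed.

Lemma L_pos : 0 < ln (/ tau).
Proof. rewrite <- ln_1. apply ln_increasing; [lra|]. rewrite <- Rinv_1. apply Rinv_lt_contravar; lra. Qed.

Lemma invT_le : / ln (1 + / tau) <= / ln (/ tau).
Proof. apply Rinv_le_contravar. apply L_pos. apply ln_le_mono.
  apply Rinv_0_lt_compat; lra. lra. Qed.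

Lemma lnv_nonneg v : 0 <= v -> 0 <= ln (1 + / tau * v).
Proof. intros Hv. rewrite <- ln_1. apply ln_le_mono; [lra|].
  assert (0 < / tau) by (apply Rinv_0_lt_compat; lra). nra. Qed.

Lemma ln_step u v d : 0 < u -> 0 <= v -> 0 <= d -> v <= u + d ->
  ln (1 + / tau * v) - ln (1 + / tau * u) <= d / u.
Proof. intros Hu Hv Hd Hvu. assert (it : 0 < / tau) by (apply Rinv_0_lt_compat; lra).
  assert (ln (1 + / tau * v) <= ln (1 + / tau * (u + d))) by (apply ln_le_mono; nra).
  assert (H2 := ln_diff (1 + / tau * (u + d)) (1 + / tau * u) ltac:(nra) ltac:(nra)).
  assert ((1 + / tau * (u + d) - (1 + / tau * u)) / (1 + / tau * u) = d / (tau + u)) by (field; lra).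
  assert (d / (tau + u) <= d / u). { unfold Rdiv. apply Rmult_le_compat_l; auto. apply Rinv_le_contravar; lra. }
  lra. Qed.

Lemma ln_big v : 0 <= v -> ln (1 + / tau * v) <= ln (1 + / tau) + v.
Proof. intros Hv. assert (it : 0 < / tau) by (apply Rinv_0_lt_compat; lra).
  destruct (Rle_or_lt v 1).
  - assert (ln (1 + / tau * v) <= ln (1 + / tau)) by (apply ln_le_mono; nra). lra.
  - assert (H1 := ln_step 1 v (v - 1) ltac:(lra) Hv ltac:(lra) ltac:(lra)).
    rewrite Rmult_1_r in H1. unfold Rdiv in H1. rewrite Rinv_1 in H1. lra. Qed.
End PenLemmas.

Lemma pen_diff tau x z d ic2 ic3 : 0 <= tau < 1 -> 0 <= d -> Rabs x <= Rabs z + d ->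
  (x <> 0 -> 1 <= ic3 * Rabs x) -> (z <> 0 -> 1 <= ic2 * Rabs z) -> 0 <= ic2 -> 0 <= ic3 ->
  pen tau x - pen tau z <= ind (nzb x) * (d * ((2 * ic2 + 1) * inv_log_inv tau + ic3)).
Proof.
  intros Ht Hd Hxz H3 H2 P2 P3. unfold pen, inv_log_inv.
  destruct (Req_dec_T tau 0) as [E|E].
  - assert (R0 : 0 <= d * ((2 * ic2 + 1) * 0 + ic3)) by nra.
    destruct (nzb x) eqn:Ex; destruct (nzb z) eqn:Ez; simpl; try lra.
    apply nzb_true in Ex. apply nzb_false in Ez. subst z. rewrite Rabs_R0 in Hxz.
    specialize (H3 Ex). assert (ic3 * Rabs x <= ic3 * d) by (apply Rmult_le_compat_l; lra). nra.
  - assert (Ht' : 0 < tau < 1) by lra.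
    assert (TP := T_pos tau Ht'). assert (LP := L_pos tau Ht'). assert (IT := invT_le tau Ht').
    set (T := ln (1 + / tau)) in *. set (L := / ln (/ tau)) in *.
    assert (L0 : 0 < L) by (apply Rinv_0_lt_compat; auto).
    assert (pz : 0 <= ln (1 + / tau * Rabs z) / T) by (unfold Rdiv; apply Rmult_le_pos; [apply lnv_nonneg; [auto|apply Rabs_pos] | left; apply Rinv_0_lt_compat; auto]).
    destruct (nzb x) eqn:Ex; simpl.
    + apply nzb_true in Ex. specialize (H3 Ex).
      destruct (Req_dec z 0) as [Z|Z].
      * subst z. rewrite Rabs_R0 in *. rewrite Rmult_0_r, Rplus_0_r, ln_1. unfold Rdiv at 2. rewrite Rmult_0_l.
        assert (HB := ln_big tau Ht' (Rabs x) (Rabs_pos x)). fold T in HB.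
        assert (ln (1 + / tau * Rabs x) / T <= 1 + Rabs x * / T).
        { apply (Rmult_le_reg_l T); auto. unfold Rdiv. field_simplify; lra. }
        assert (Rabs x * / T <= d * L) by (apply Rmult_le_compat; [apply Rabs_pos| left; apply Rinv_0_lt_compat; auto | lra | lra]).
        assert (1 <= ic3 * d) by (assert (ic3 * Rabs x <= ic3 * d) by (apply Rmult_le_compat_l; lra); lra).
        assert (0 <= d * (2 * ic2 * L)) by (apply Rmult_le_pos; auto; nra). nra.
      * specialize (H2 Z). assert (Pz : 0 < Rabs z) by (apply Rabs_pos_lt; auto).
        assert (HS := ln_step tau Ht' (Rabs z) (Rabs x) d Pz (Rabs_pos x) Hd Hxz).
        assert (E1 : ln (1 + / tau * Rabs x) / T - ln (1 + / tau * Rabs z) / T =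
                (ln (1 + / tau * Rabs x) - ln (1 + / tau * Rabs z)) * / T) by (field; lra).
        rewrite E1.
        assert (d / Rabs z <= d * ic2).
        { unfold Rdiv. apply Rmult_le_compat_l; auto. apply (Rmult_le_reg_l (Rabs z)); auto.
          rewrite Rinv_r by lra. lra. }
        assert ((ln (1 + / tau * Rabs x) - ln (1 + / tau * Rabs z)) * / T <= (d * ic2) * L).
        { destruct (Rle_or_lt 0 (ln (1 + / tau * Rabs x) - ln (1 + / tau * Rabs z))).
          - apply Rmult_le_compat; auto. left; apply Rinv_0_lt_compat; auto. lra.
          - assert (0 <= d * ic2 * L) by (apply Rmult_le_pos; [apply Rmult_le_pos|]; lra).
            assert (0 < / T) by (apply Rinv_0_lt_compat; auto). nra. }
        assert (0 <= d * ic3) by nra. assert (0 <= d * (ic2 * L)) by (apply Rmult_le_pos; [|apply Rmult_le_pos]; lra).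
        assert (0 <= d * L) by nra. nra.
    + apply nzb_false in Ex. subst x. rewrite Rabs_R0, Rmult_0_r, Rplus_0_r, ln_1. unfold Rdiv at 1. lra.
Qed.

Lemma Vobj_eq n p m grp X y lam rho1 rho2 tau b :
  Vobj n p m grp X y lam rho1 rho2 tau b = fit n p X y lam b
    + rho1 * fsum p (fun j => pen tau (b j))
    + rho2 * fsum m (fun k => sqrt (INR (gsize p grp k)) * pen tau (gnorm p grp b k)).
Proof. unfold Vobj. destruct (Req_dec_T tau 0) as [E|E].
  - unfold V0. rewrite card_nz_eq. f_equal; [f_equal|]; f_equal; apply fsum_ext; intros;
    unfold pen; destruct (Req_dec_T tau 0); try contradiction; auto.
  - unfold Vtau. f_equal; [f_equal|]; f_equal; apply fsum_ext; intros;
    unfold pen; destruct (Req_dec_T tau 0); try contradiction; auto.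
    rewrite (Rabs_pos_eq (gnorm p grp b j)) by apply gnorm_pos. auto. Qed.

Lemma ind_sq b : ind b ^ 2 = ind b.
Proof. destruct b; simpl; ring. Qed.

Lemma ind_cs p (c : nat -> bool) v :
  fsum p (fun j => ind (c j) * Rabs (v j)) <= sqrt (fsum p (fun j => ind (c j))) * norm2 p v.
Proof. eapply Rle_trans; [apply (CS p (fun j => ind (c j)) (fun j => Rabs (v j)))|].
  cbv beta. right. f_equal.
  - f_equal. apply fsum_ext. intros. apply ind_sq.
  - unfold norm2. f_equal. apply fsum_ext. intros. rewrite <- Rsqr_pow2, <- Rsqr_abs, Rsqr_pow2. auto. Qed.

Lemma qR_eq p m grp b : INR (qR p m grp b) =
  fsum m (fun k => (sqrt (INR (gsize p grp k)) * ind (nzb (gnorm p grp b k))) ^ 2).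
Proof. unfold qR. rewrite INR_nsum. apply fsum_ext. intros k _.
  rewrite Rpow_mult_distr, ind_sq, <- Rsqr_pow2, Rsqr_sqrt by apply pos_INR.
  destruct (nzb (gnorm p grp b k)); simpl; ring. Qed.

Lemma gsum_sq p m grp v :
  fsum m (fun k => gnorm p grp v k ^ 2) <= norm2 p v * norm2 p v.
Proof. rewrite norm2_sq.
  rewrite (fsum_ext m _ (fun k => fsum p (fun j => if Nat.eqb (grp j) k then v j ^ 2 else 0))).
  2:{ intros k _. unfold gnorm. rewrite <- Rsqr_pow2, Rsqr_sqrt; auto.
      apply fsum_nonneg. intros. destruct (Nat.eqb (grp j) k); nra. }
  rewrite fsum_swap. apply fsum_le. intros j _.
  rewrite (fsum_ind m (grp j) (fun _ => v j ^ 2)). destruct (Nat.ltb (grp j) m); nra. Qed.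

Lemma s_le_qR p m grp b : is_group_partition p m grp ->
  INR (card_nz p b) <= INR (qR p m grp b).
Proof. intros [Hg _]. rewrite card_nz_eq. unfold qR. rewrite INR_nsum.
  apply Rle_trans with (fsum p (fun j => fsum m (fun k => if Nat.eqb (grp j) k then ind (nzb (gnorm p grp b k)) else 0))).
  - apply fsum_le. intros j Hj. rewrite (fsum_ind m (grp j) (fun k => ind (nzb (gnorm p grp b k)))).
    destruct (nzb (b j)) eqn:E.
    + apply nzb_true in E. specialize (Hg j Hj). destruct (Nat.ltb_spec (grp j) m); try lia.
      assert (0 < Rabs (b j)) by (apply Rabs_pos_lt; auto).
      assert (Rabs (b j) <= gnorm p grp b (grp j)) by (apply gnorm_ge; auto).
      rewrite nzb_nz by lra. simpl; lra.
    + simpl. destruct (Nat.ltb (grp j) m); [apply ind_nonneg|lra].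
  - rewrite fsum_swap. apply fsum_le. intros k _.
    destruct (nzb (gnorm p grp b k)); simpl.
    + unfold gsize. rewrite INR_nsum. right. apply fsum_ext. intros. destruct (Nat.eqb (grp j) k); simpl; ring.
    + rewrite (fsum_ext p _ (fun _ => 0)) by (intros; destruct (Nat.eqb (grp j) k); ring).
      rewrite fsum_zero; lra. Qed.

Lemma ilog_nonneg tau : 0 <= tau < 1 -> 0 <= inv_log_inv tau.
Proof. intros H. unfold inv_log_inv. destruct (Req_dec_T tau 0). lra.
  left. apply Rinv_0_lt_compat. apply L_pos. lra. Qed.

Lemma pen_sum1 p tau bh be : 0 <= tau < 1 ->
  fsum p (fun j => pen tau (be j)) - fsum p (fun j => pen tau (bh j)) <=
  ((2 * inv_min_abs_supp p bh + 1) * inv_log_inv tau + inv_min_abs_supp p be) *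
  fsum p (fun j => ind (nzb (be j)) * Rabs (bh j - be j)).
Proof. intros Ht. rewrite <- fsum_minus, <- fsum_scal. apply fsum_le. intros j Hj.
  destruct (inv_min_spec p bh) as [P2 H2]. destruct (inv_min_spec p be) as [P3 H3].
  eapply Rle_trans. apply (pen_diff tau (be j) (bh j) (Rabs (bh j - be j)) (inv_min_abs_supp p bh) (inv_min_abs_supp p be)); auto.
  - apply Rabs_pos.
  - replace (be j) with (bh j - (bh j - be j)) at 1 by ring. unfold Rminus at 1; eapply Rle_trans; [apply Rabs_triang|]. rewrite Rabs_Ropp. lra.
  - right; ring. Qed.

Lemma pen_sum2 p m grp tau bh be : 0 <= tau < 1 ->
  fsum m (fun k => sqrt (INR (gsize p grp k)) * pen tau (gnorm p grp be k))
  - fsum m (fun k => sqrt (INR (gsize p grp k)) * pen tau (gnorm p grp bh k)) <=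
  ((2 * inv_min_abs_supp p bh + 1) * inv_log_inv tau + inv_min_abs_supp p be) *
  fsum m (fun k => (sqrt (INR (gsize p grp k)) * ind (nzb (gnorm p grp be k))) * gnorm p grp (fun j => bh j - be j) k).
Proof. intros Ht. rewrite <- fsum_minus, <- fsum_scal. apply fsum_le. intros k Hk.
  destruct (inv_min_spec p bh) as [P2 H2]. destruct (inv_min_spec p be) as [P3 H3].
  assert (Q := sqrt_pos (INR (gsize p grp k))).
  assert (D := pen_diff tau (gnorm p grp be k) (gnorm p grp bh k) (gnorm p grp (fun j => bh j - be j) k)
     (inv_min_abs_supp p bh) (inv_min_abs_supp p be) Ht (gnorm_pos _ _ _ _)).
  rewrite !Rabs_pos_eq in D by apply gnorm_pos.
  specialize (D (gnorm_tri p grp bh be k)).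
  assert (A3 : gnorm p grp be k <> 0 -> 1 <= inv_min_abs_supp p be * gnorm p grp be k).
  { intros Z. destruct (gnorm_nz p grp be k Z) as [j [Hj [Hg Hb]]].
    specialize (H3 j Hj Hb). assert (Rabs (be j) <= gnorm p grp be k) by (apply gnorm_ge; auto).
    assert (inv_min_abs_supp p be * Rabs (be j) <= inv_min_abs_supp p be * gnorm p grp be k) by (apply Rmult_le_compat_l; auto). lra. }
  assert (A2 : gnorm p grp bh k <> 0 -> 1 <= inv_min_abs_supp p bh * gnorm p grp bh k).
  { intros Z. destruct (gnorm_nz p grp bh k Z) as [j [Hj [Hg Hb]]].
    specialize (H2 j Hj Hb). assert (Rabs (bh j) <= gnorm p grp bh k) by (apply gnorm_ge; auto).
    assert (inv_min_abs_supp p bh * Rabs (bh j) <= inv_min_abs_supp p bh * gnorm p grp bh k) by (apply Rmult_le_compat_l; auto). lra. }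
  specialize (D A3 A2 P2 P3).
  rewrite <- Rmult_minus_distr_l.
  eapply Rle_trans. apply Rmult_le_compat_l; [exact Q| exact D]. right; ring. Qed.

Theorem theorem1
  (n p m : nat) (grp : nat -> nat)
  (X : nat -> nat -> R) (y beta : nat -> R)
  (lam rho1 rho2 tau kappa : R) (bhat : nat -> R)
  (Hn : (0 < n)%nat)
  (Hgrp : is_group_partition p m grp)
  (Hs : (1 <= card_nz p beta)%nat)
  (Hlam : 0 <= lam) (Hrho1 : 0 <= rho1) (Hrho2 : 0 <= rho2)
  (Htau : 0 <= tau < 1)
  (Hmin : forall b' : nat -> R,
      Vobj n p m grp X y lam rho1 rho2 tau bhat <= Vobj n p m grp X y lam rho1 rho2 tau b')
  (Hmax : (1 <= Nat.max (qR p m grp beta) (card_nz p bhat) <= p)%nat)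
  (Hkappa : is_kappa n p X kappa)
  (Hpos : kappa + lam / INR n > 0) :
  norm2 p (fun j => bhat j - beta j)
  <= sqrt (INR (qR p m grp beta)) / (kappa + lam / INR n)
     * ( 4 * (1 + sqrt (INR (card_nz p bhat) / (4 * INR (card_nz p beta))))
             * (XtEps_inf n p X y beta / INR n)
       + 2 * max_abs_on_supp p beta * (lam / INR n)
       + ((2 * inv_min_abs_supp p bhat + 1) * inv_log_inv tau + inv_min_abs_supp p beta)
             * ((rho1 + rho2) / INR n) ).
Proof.
  set (d := fun j => bhat j - beta j).
  set (N := norm2 p d).
  set (e := fun i => y i - Xmul p X beta i).
  set (D := fun i => Xmul p X d i).
  set (g := fun j => fsum n (fun i => X i j * e i)).
  assert (HX : forall i, Xmul p X bhat i = Xmul p X beta i + D i).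
  { intros i. unfold D, Xmul, d. rewrite <- fsum_plus. apply fsum_ext. intros; ring. }
  assert (Efit : fit n p X y lam bhat = fit n p X y lam beta + fsum n (fun i => D i ^ 2)
      - 2 * fsum p (fun j => d j * g j) + lam * (fsum p (fun j => d j ^ 2) + 2 * fsum p (fun j => beta j * d j))).
  { unfold fit.
    assert (E1 : fsum n (fun i => (y i - Xmul p X bhat i) ^ 2) =
       fsum n (fun i => (y i - Xmul p X beta i) ^ 2) - 2 * fsum n (fun i => e i * D i) + fsum n (fun i => D i ^ 2)).
    { rewrite <- fsum_scal, <- fsum_minus, <- fsum_plus. apply fsum_ext. intros i _. rewrite HX. unfold e. ring. }
    assert (E2 : fsum n (fun i => e i * D i) = fsum p (fun j => d j * g j)).
    { unfold D, Xmul, g.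
      rewrite (fsum_ext n _ (fun i => fsum p (fun j => e i * X i j * d j))).
      2:{ intros i _. rewrite <- fsum_scal. apply fsum_ext; intros; ring. }
      rewrite fsum_swap. apply fsum_ext. intros j _. rewrite <- fsum_scal. apply fsum_ext; intros; ring. }
    assert (E3 : fsum p (fun j => bhat j ^ 2) = fsum p (fun j => beta j ^ 2) + (fsum p (fun j => d j ^ 2) + 2 * fsum p (fun j => beta j * d j))).
    { rewrite <- fsum_scal, <- !fsum_plus. apply fsum_ext. intros; unfold d; ring. }
    rewrite E1, E2, E3. ring. }
  assert (Hb := Hmin beta). rewrite !Vobj_eq, Efit in Hb.
  assert (P1 := pen_sum1 p tau bhat beta Htau).
  assert (P2 := pen_sum2 p m grp tau bhat beta Htau).
  set (K := (2 * inv_min_abs_supp p bhat + 1) * inv_log_inv tau + inv_min_abs_supp p beta) in *.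
  set (S := INR (card_nz p beta)). set (Sh := INR (card_nz p bhat)). set (Q := INR (qR p m grp beta)).
  set (G := XtEps_inf n p X y beta). set (M := max_abs_on_supp p beta).
  assert (K0 : 0 <= K).
  { destruct (inv_min_spec p bhat) as [A _]. destruct (inv_min_spec p beta) as [B _].
    assert (Hl := ilog_nonneg tau Htau). unfold K. nra. }
  assert (G0 : 0 <= G) by apply fmax_spec.
  assert (HG : forall j, (j < p)%nat -> Rabs (g j) <= G) by (intros j Hj; unfold G, XtEps_inf; exact (proj2 (fmax_spec p (fun j => Rabs (g j))) j Hj)).
  destruct (max_on_spec p beta) as [M0 HM]. fold M in M0, HM.
  assert (N0 : 0 <= N) by apply norm2_pos.
  assert (NN : fsum p (fun j => d j ^ 2) = N * N) by (symmetry; apply norm2_sq).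
  assert (C1 : fsum p (fun j => ind (nzb (beta j)) * Rabs (d j)) <= sqrt S * N).
  { eapply Rle_trans; [apply ind_cs|]. unfold S. rewrite card_nz_eq. apply Rle_refl. }
  assert (C1h : fsum p (fun j => ind (nzb (bhat j)) * Rabs (d j)) <= sqrt Sh * N).
  { eapply Rle_trans; [apply ind_cs|]. unfold Sh. rewrite card_nz_eq. apply Rle_refl. }
  assert (C2 : fsum m (fun k => (sqrt (INR (gsize p grp k)) * ind (nzb (gnorm p grp beta k))) * gnorm p grp d k) <= sqrt Q * N).
  { eapply Rle_trans; [apply CS|]. unfold Q. rewrite qR_eq. apply Rmult_le_compat_l; [apply sqrt_pos|].
    rewrite <- (sqrt_square N) by auto. apply sqrt_le_1_alt. apply gsum_sq. }
  assert (L1 : fsum p (fun j => d j * g j) <= G * (sqrt S * N + sqrt Sh * N)).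
  { eapply Rle_trans; [|apply Rmult_le_compat_l; [exact G0| apply Rplus_le_compat; [exact C1|exact C1h]]].
    rewrite <- fsum_plus, <- fsum_scal. apply fsum_le. intros j Hj.
    assert (A1 : d j * g j <= Rabs (d j) * G).
    { eapply Rle_trans; [apply Rle_abs|]. rewrite Rabs_mult. apply Rmult_le_compat_l; [apply Rabs_pos|auto]. }
    assert (A2 : Rabs (d j) <= ind (nzb (beta j)) * Rabs (d j) + ind (nzb (bhat j)) * Rabs (d j)).
    { assert (Pd := Rabs_pos (d j)). destruct (nzb (beta j)) eqn:E1; destruct (nzb (bhat j)) eqn:E2; simpl; try lra.
      apply nzb_false in E1. apply nzb_false in E2. unfold d. rewrite E1, E2. rewrite Rminus_0_r, Rabs_R0. lra. }
    assert (Rabs (d j) * G <= G * (ind (nzb (beta j)) * Rabs (d j) + ind (nzb (bhat j)) * Rabs (d j))) by nra.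
    lra. }
  assert (L2 : - fsum p (fun j => beta j * d j) <= M * (sqrt S * N)).
  { eapply Rle_trans; [|apply Rmult_le_compat_l; [exact M0|exact C1]].
    rewrite <- fsum_scal, <- fsum_opp.
    apply fsum_le. intros j Hj. destruct (nzb (beta j)) eqn:E; simpl.
    - assert (- (beta j * d j) <= Rabs (beta j) * Rabs (d j)).
      { rewrite <- Rabs_mult. rewrite <- Rabs_Ropp. apply Rle_abs. }
      specialize (HM j Hj). assert (Rabs (beta j) * Rabs (d j) <= M * Rabs (d j)) by (apply Rmult_le_compat_r; [apply Rabs_pos|auto]).
      lra.
    - apply nzb_false in E. rewrite E. lra. }
  assert (Hnp : 0 < INR n) by (apply lt_0_INR; lia).
  assert (Hk : INR n * kappa * (N * N) <= fsum n (fun i => D i ^ 2)).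
  { destruct Hkappa as [_ Hk].
    destruct (Req_dec N 0) as [Z|Z].
    - rewrite Z, !Rmult_0_r. apply fsum_nonneg; intros; nra.
    - assert (NP : 0 < N) by lra.
      set (w := fun j => d j / N).
      assert (Hw : norm2 p w = 1).
      { unfold norm2, w. rewrite (fsum_ext p _ (fun j => (/ (N*N)) * d j ^ 2)) by (intros; field; lra).
        rewrite fsum_scal, NN. replace (/ (N*N) * (N*N)) with 1 by (field; lra). apply sqrt_1. }
      specialize (Hk w Hw).
      assert (EX : fsum n (fun i => Xmul p X w i ^ 2) = / (N*N) * fsum n (fun i => D i ^ 2)).
      { rewrite <- fsum_scal. apply fsum_ext. intros i _. unfold D, w, Xmul.
        rewrite (fsum_ext p (fun j => X i j * (d j / N)) (fun j => / N * (X i j * d j))) by (intros; field; lra).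
        rewrite fsum_scal. field. lra. }
      rewrite EX in Hk.
      apply (Rmult_le_compat_l (INR n * (N*N))) in Hk; [|nra].
      replace (INR n * (N * N) * (/ (N * N) * fsum n (fun i => D i ^ 2) / INR n)) with (fsum n (fun i => D i ^ 2)) in Hk by (field; lra).
      nra. }
  assert (Q1 : rho1 * (fsum p (fun j => pen tau (beta j)) - fsum p (fun j => pen tau (bhat j))) <= rho1 * (K * (sqrt S * N))).
  { apply Rmult_le_compat_l; auto. eapply Rle_trans; [exact P1|]. apply Rmult_le_compat_l; auto. }
  assert (Q2 : rho2 * (fsum m (fun k => sqrt (INR (gsize p grp k)) * pen tau (gnorm p grp beta k)) -
     fsum m (fun k => sqrt (INR (gsize p grp k)) * pen tau (gnorm p grp bhat k))) <= rho2 * (K * (sqrt Q * N))).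
  { apply Rmult_le_compat_l; auto. eapply Rle_trans; [exact P2|]. apply Rmult_le_compat_l; auto. }
  assert (L2' : lam * - fsum p (fun j => beta j * d j) <= lam * (M * (sqrt S * N))) by (apply Rmult_le_compat_l; auto).
  set (A := 2 * G * (sqrt S + sqrt Sh) + 2 * lam * M * sqrt S + rho1 * K * sqrt S + rho2 * K * sqrt Q).
  assert (Main : (INR n * kappa + lam) * (N * N) <= A * N).
  { rewrite NN in Hb. unfold A. nra. }
  match goal with |- _ <= _ / ?k * ?B => set (Bsum := B); set (kp := k) end.
  assert (Sge : 1 <= S) by (unfold S; replace 1 with (INR 1) by reflexivity; apply le_INR; auto).
  assert (SQ : S <= Q) by (apply s_le_qR; auto).
  assert (Sh0 : 0 <= Sh) by apply pos_INR.
  assert (sqSQ : sqrt S <= sqrt Q) by (apply sqrt_le_1_alt; auto).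
  set (r := sqrt (Sh / (4 * S))).
  assert (r0 : 0 <= r) by apply sqrt_pos.
  assert (sQ0 : 0 <= sqrt Q) by apply sqrt_pos.
  assert (sS0 : 0 <= sqrt S) by apply sqrt_pos.
  assert (sSh0 : 0 <= sqrt Sh) by apply sqrt_pos.
  assert (sqSh : sqrt Sh <= 2 * sqrt Q * r).
  { apply Rsqr_incr_0_var; [|nra]. unfold Rsqr.
    rewrite sqrt_sqrt by auto.
    replace (2 * sqrt Q * r * (2 * sqrt Q * r)) with (4 * (sqrt Q * sqrt Q) * (r * r)) by ring.
    assert (0 <= Sh / (4 * S)) by (unfold Rdiv; apply Rmult_le_pos; [lra| left; apply Rinv_0_lt_compat; lra]).
    assert (0 <= Q) by lra. unfold r. rewrite !sqrt_sqrt by auto.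
    replace (4 * Q * (Sh / (4 * S))) with (Q * Sh / S) by (field; lra).
    apply (Rmult_le_reg_l S); [lra|]. replace (S * (Q * Sh / S)) with (Q * Sh) by (field; lra). nra. }
  assert (HnB : INR n * Bsum = 4 * (1 + r) * G + 2 * M * lam + K * (rho1 + rho2)).
  { unfold Bsum, r. fold G M. field. lra. }
  assert (Aineq : A <= sqrt Q * (INR n * Bsum)).
  { rewrite HnB. unfold A.
    assert (G * sqrt S <= G * sqrt Q) by (apply Rmult_le_compat_l; auto).
    assert (G * sqrt Sh <= G * (2 * sqrt Q * r)) by (apply Rmult_le_compat_l; auto).
    assert (lam * M * sqrt S <= lam * M * sqrt Q) by (apply Rmult_le_compat_l; auto; nra).
    assert (rho1 * K * sqrt S <= rho1 * K * sqrt Q) by (apply Rmult_le_compat_l; auto; nra).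
    nra. }
  assert (B0 : 0 <= Bsum).
  { assert (0 <= INR n * Bsum) by (rewrite HnB; assert (0 <= K * (rho1 + rho2)) by nra; nra). nra. }
  assert (kp0 : 0 < kp) by (unfold kp; lra).
  assert (Hc : INR n * kappa + lam = INR n * kp) by (unfold kp; field; lra).
  assert (KN : kp * N <= sqrt Q * Bsum).
  { destruct (Req_dec N 0) as [Z|Z].
    - rewrite Z, Rmult_0_r. nra.
    - assert (NP : 0 < N) by lra. rewrite Hc in Main.
      assert (INR n * kp * N <= A) by (apply (Rmult_le_reg_r N); auto; nra).
      apply (Rmult_le_reg_l (INR n)); auto. nra. }
  apply (Rmult_le_reg_l kp); auto. replace (kp * (sqrt Q / kp * Bsum)) with (sqrt Q * Bsum) by (field; lra). exact KN.
Qed.
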